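(* Let $G$ be a bipartite instance, let $(u,v)\in E$ with $u$'s deadline earlier than $v$'s, and fix the ranks $\mathbf y_{-uv}$ of all vertices other than $u,v$. Let $\tau$ be the marginal rank of $u$ w.r.t. $\mathbf y_{-uv}$ in $G-\{v\}$ and, for $y_u\in[0,1]$, let $\theta(y_u)$ be the marginal rank of $v$ in $G$ w.r.t. the ranks $(y_u,\mathbf y_{-uv})$. Then there exists $\theta\in[0,1]$ such that $\theta(y_u)=\theta$ for all $y_u>\tau$.
   Context: Fully online matching model on a graph $G=(V,E)$: each step is the arrival or the deadline of a vertex; at arrival, edges to previously arrived vertices are revealed; every neighbor of $v$ arrives before $v$'s deadline; at a vertex's deadline, if unmatched, it is irrevocably matched to an unmatched neighbor or left unmatched. Ranking: each vertex $w$ has a rank $y_w\in[0,1)$; at the deadline of an unmatched vertex $w$, if it has unmatched neighbors it is matched to the unmatched neighbor of minimum rank. If an edge $(a,b)$ is matched at $a$'s deadline, $a$ is called active and $b$ passive. Marginal rank: for a vertex $w$ in a graph $H$ and fixed ranks of all other vertices of $H$, the marginal rank of $w$ is the largest value $\theta\in[0,1]$ such that $w$ is passive in the matching produced by Ranking on $H$ when $y_w=\theta^-$ (rank infinitesimally below $\theta$); it equals $0$ if no such value exists. *)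

(* Defs.v *)
From Stdlib Require Import Reals Lra Lia List Arith Bool.
Import ListNotations.
Open Scope R_scope.

(** Events of the fully online model: arrival or deadline of a vertex (vertices are nats). *)
Inductive event : Type := Arr (x : nat) | Dl (x : nat).

Definition event_eqb (e1 e2 : event) : bool :=
  match e1, e2 with
  | Arr a, Arr b => Nat.eqb a b
  | Dl a, Dl b => Nat.eqb a b
  | _, _ => false
  end.

Record instance : Type := Instance { adj : nat -> nat -> bool; events : list event }.

Definition before (G : instance) (e1 e2 : event) : Prop :=
  exists i j, (i < j)%nat /\ nth_error (events G) i = Some e1 /\ nth_error (events G) j = Some e2.

Definition is_vertex (G : instance) (x : nat) : Prop := In (Arr x) (events G).

Definition valid_instance (G : instance) : Prop :=
  NoDup (events G) /\
  (forall x, In (Arr x) (events G) <-> In (Dl x) (events G)) /\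
  (forall x, is_vertex G x -> before G (Arr x) (Dl x)) /\
  (forall a b, adj G a b = adj G b a) /\
  (forall a, adj G a a = false) /\
  (forall a b, adj G a b = true -> is_vertex G a) /\
  (forall a b, adj G a b = true -> before G (Arr a) (Dl b)).

Definition bipartite (G : instance) : Prop :=
  exists side : nat -> bool, forall a b, adj G a b = true -> side a <> side b.

Definition remove_vertex (G : instance) (v : nat) : instance :=
  Instance (fun a b => adj G a b && negb (Nat.eqb a v) && negb (Nat.eqb b v))
           (filter (fun e => negb (event_eqb e (Arr v)) && negb (event_eqb e (Dl v))) (events G)).

Definition verts (G : instance) : list nat :=
  flat_map (fun e => match e with Arr x => [x] | Dl _ => [] end) (events G).

(** vertex of minimum rank in a list (ties broken towards the earlier element) *)
Fixpoint argmin (y : nat -> R) (l : list nat) : option nat :=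
  match l with
  | [] => None
  | x :: l' =>
      match argmin y l' with
      | None => Some x
      | Some z => if Rle_dec (y x) (y z) then Some x else Some z
      end
  end.

(** matching state: list of matched edges (active, passive) *)
Definition matched (s : list (nat * nat)) (x : nat) : bool :=
  existsb (fun p => Nat.eqb (fst p) x || Nat.eqb (snd p) x) s.

Definition ranking_step (G : instance) (y : nat -> R) (s : list (nat * nat)) (e : event)
  : list (nat * nat) :=
  match e with
  | Arr _ => s
  | Dl w =>
      if matched s w then s else
      match argmin y (filter (fun x => adj G w x && negb (matched s x)) (verts G)) with
      | None => s
      | Some x => s ++ [(w, x)]
      end
  end.

Definition ranking (G : instance) (y : nat -> R) : list (nat * nat) :=
  fold_left (ranking_step G y) (events G) [].

Definition passive (G : instance) (y : nat -> R) (w : nat) : Prop :=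
  exists a, In (a, w) (ranking G y).

Definition upd (y : nat -> R) (w : nat) (t : R) : nat -> R :=
  fun x => if Nat.eqb x w then t else y x.

(** w is passive when y_w = theta^- (all ranks in a left neighbourhood of theta) *)
Definition passive_at_minus (G : instance) (y : nat -> R) (w : nat) (theta : R) : Prop :=
  exists eps, 0 < eps /\
    forall t, theta - eps < t < theta -> passive G (upd y w t) w.

Definition is_marginal_rank (G : instance) (y : nat -> R) (w : nat) (theta : R) : Prop :=
  (0 <= theta <= 1 /\ passive_at_minus G y w theta /\
     forall th, 0 <= th <= 1 -> passive_at_minus G y w th -> th <= theta)
  \/
  ((forall th, 0 <= th <= 1 -> ~ passive_at_minus G y w th) /\ theta = 0).

(* Main.v *)
Require Import Defs.
From Stdlib Require Import Reals List Lra Lia Arith Bool Classical.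
Import ListNotations.
Open Scope R_scope.

Lemma argmin_in y l z : argmin y l = Some z -> In z l.
Proof.
  induction l as [|x l IH]; simpl; [discriminate|].
  destruct (argmin y l) as [z'|] eqn:E.
  - destruct (Rle_dec (y x) (y z')); intros H; injection H as <-; [left; auto| right; auto].
  - intros H; injection H as <-; left; auto.
Qed.

Lemma argmin_none y l : argmin y l = None -> l = [].
Proof.
  destruct l as [|x l]; simpl; auto.
  destruct (argmin y l); [destruct Rle_dec|]; discriminate.
Qed.

Lemma argmin_min y l z : argmin y l = Some z -> forall w, In w l -> y z <= y w.
Proof.
  revert z; induction l as [|x l IH]; simpl; intros z; [discriminate|].
  destruct (argmin y l) as [z'|] eqn:E.
  - specialize (IH z' eq_refl).
    destruct (Rle_dec (y x) (y z')) as [r|r]; intros H; injection H as <-;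
      intros w [<-|Hw]; try lra; specialize (IH w Hw); lra.
  - intros H; injection H as <-. rewrite (argmin_none _ _ E).
    intros w [<-|[]]; lra.
Qed.

Lemma argmin_ext y1 y2 l : (forall x, In x l -> y1 x = y2 x) -> argmin y1 l = argmin y2 l.
Proof.
  induction l as [|x l IH]; simpl; intros H; auto.
  rewrite IH by auto.
  destruct (argmin y2 l) as [z|] eqn:E; auto.
  rewrite (H x (or_introl eq_refl)), (H z (or_intror (argmin_in _ _ _ E))). reflexivity.
Qed.

Lemma argmin_mono w y1 y2 l :
  (forall x, x <> w -> y1 x = y2 x) -> y2 w <= y1 w ->
  argmin y2 l = Some w \/ argmin y2 l = argmin y1 l.
Proof.
  intros Hag Hle.
  induction l as [|x l IH]; simpl; auto.
  destruct IH as [IH|IH].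
  - rewrite IH. destruct (Rle_dec (y2 x) (y2 w)) as [r|r]; [|left; auto].
    destruct (Nat.eq_dec x w) as [->|nxw]; [left; auto|right].
    destruct (argmin y1 l) as [z|] eqn:E1; auto.
    destruct (Rle_dec (y1 x) (y1 z)) as [r'|r']; auto. exfalso.
    pose proof (argmin_min _ _ _ IH z (argmin_in _ _ _ E1)) as Hm.
    rewrite (Hag x nxw) in r'.
    destruct (Nat.eq_dec z w) as [->|nzw]; [lra|]. rewrite (Hag z nzw) in r'. lra.
  - rewrite IH. destruct (argmin y1 l) as [z|] eqn:E1; auto.
    destruct (Rle_dec (y2 x) (y2 z)) as [r|r]; destruct (Rle_dec (y1 x) (y1 z)) as [r'|r']; auto.
    + destruct (Nat.eq_dec x w) as [->|nxw]; [left; auto|exfalso].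
      rewrite (Hag x nxw) in r'.
      destruct (Nat.eq_dec z w) as [->|nzw]; [lra|]. rewrite (Hag z nzw) in r'. lra.
    + destruct (Nat.eq_dec z w) as [->|nzw]; [left; auto|exfalso].
      rewrite (Hag z nzw) in r'.
      destruct (Nat.eq_dec x w) as [->|nxw]; [lra|]. rewrite (Hag x nxw) in r'. lra.
Qed.

Lemma argmin_filter v y l :
  argmin y l = Some v \/ argmin y l = argmin y (filter (fun x => negb (Nat.eqb x v)) l).
Proof.
  induction l as [|x l IH]; simpl; auto.
  destruct (Nat.eqb x v) eqn:Ex; simpl.
  - apply Nat.eqb_eq in Ex; subst x.
    destruct (argmin y l) as [z|] eqn:E; [|left; auto].
    destruct (Rle_dec (y v) (y z)); [left; auto|].
    destruct IH as [IH|IH]; [injection IH as ->; lra|right; auto].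
  - destruct IH as [IH|IH].
    + rewrite IH. destruct (Rle_dec (y x) (y v)) as [r|r]; [right|left; auto].
      destruct (argmin y (filter (fun x0 => negb (x0 =? v)) l)) as [z|] eqn:E; auto.
      destruct (Rle_dec (y x) (y z)) as [r'|r']; auto. exfalso.
      apply argmin_in in E. apply filter_In in E as [E _].
      pose proof (argmin_min _ _ _ IH z E). lra.
    + rewrite IH. right; reflexivity.
Qed.

Definition cands (G : instance) (s : list (nat*nat)) (w : nat) :=
  filter (fun x => adj G w x && negb (matched s x)) (verts G).

Lemma step_Dl G y s w : ranking_step G y s (Dl w) =
  if matched s w then s else
  match argmin y (cands G s w) with None => s | Some x => s ++ [(w, x)] end.
Proof. reflexivity. Qed.

Lemma step_Arr G y s w : ranking_step G y s (Arr w) = s.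
Proof. reflexivity. Qed.

Lemma step_incl G y s e p : In p s -> In p (ranking_step G y s e).
Proof.
  destruct e as [x|x]; simpl; auto.
  destruct (matched s x); auto.
  destruct (argmin _ _); auto. intros; apply in_or_app; left; auto.
Qed.

Lemma persist G y l s p : In p s -> In p (fold_left (ranking_step G y) l s).
Proof.
  revert s; induction l as [|e l IH]; simpl; auto.
  intros s H; apply IH, step_incl, H.
Qed.

Lemma matched_app s l x : matched s x = true -> matched (s ++ l) x = true.
Proof.
  unfold matched; rewrite existsb_app; intros H; rewrite H; reflexivity.
Qed.

Lemma matched_false_snd s v c : matched s v = false -> ~ In (c, v) s.
Proof.
  unfold matched; intros Hm Hin.
  assert (existsb (fun p => Nat.eqb (fst p) v || Nat.eqb (snd p) v) s = true) as H.
  { apply existsb_exists; exists (c, v); split; auto; simpl; rewrite Nat.eqb_refl, orb_true_r; auto. }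
  rewrite H in Hm; discriminate.
Qed.

Lemma cands_in G s w x : In x (cands G s w) -> adj G w x = true /\ matched s x = false.
Proof.
  unfold cands; intros H; apply filter_In in H as [_ H].
  apply andb_true_iff in H as [H1 H2]; apply negb_true_iff in H2; auto.
Qed.

Lemma passive_mono_gen G w y1 y2 :
  (forall x, x <> w -> y1 x = y2 x) -> y2 w <= y1 w ->
  forall l s, (exists c, In (c,w) (fold_left (ranking_step G y1) l s)) ->
     (exists c, In (c,w) (fold_left (ranking_step G y2) l s)).
Proof.
  intros Hag Hle l; induction l as [|e l IH]; simpl; auto.
  intros s H. destruct e as [x|x].
  - rewrite step_Arr in *; auto.
  - rewrite step_Dl in *. destruct (matched s x); auto.
    destruct (argmin_mono w y1 y2 (cands G s x) Hag Hle) as [E|E].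
    + rewrite E. exists x. apply persist, in_or_app; right; left; auto.
    + rewrite E. auto.
Qed.

Definition Pdone G v s := (forall c, ~ In (c,v) s) /\
  (matched s v = true \/ forall x, adj G v x = true -> matched s x = true).

Lemma E_lemma G y v : (forall a b, adj G a b = adj G b a) ->
  forall l s, Pdone G v s -> ~ exists c, In (c,v) (fold_left (ranking_step G y) l s).
Proof.
  intros Hsym l; induction l as [|e l IH]; simpl; intros s [P1 P2].
  - intros [c Hc]; exact (P1 c Hc).
  - apply IH. destruct e as [w|w]; [rewrite step_Arr; split; auto|].
    rewrite step_Dl. destruct (matched s w) eqn:Hw; [split; auto|].
    destruct (argmin y (cands G s w)) as [z|] eqn:Ha; [|split; auto].
    apply argmin_in, cands_in in Ha as [Ha1 Ha2].
    assert (z <> v).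
    { intros ->. destruct P2 as [P2|P2]; [congruence|].
      rewrite Hsym in Ha1. rewrite (P2 w Ha1) in Hw; discriminate. }
    split.
    + intros c Hc; apply in_app_or in Hc as [Hc|[Hc|[]]]; [exact (P1 c Hc)|].
      injection Hc; intros; auto.
    + destruct P2 as [P2|P2]; [left; apply matched_app; auto|right; intros x Hx; apply matched_app; auto].
Qed.

Lemma is_vertex_verts G x : is_vertex G x -> In x (verts G).
Proof.
  unfold is_vertex, verts; intros H; apply in_flat_map; exists (Arr x); simpl; auto.
Qed.

Lemma F_lemma G y v : (forall a b, adj G a b = adj G b a) -> (forall a, adj G a a = false) ->
  (forall a b, adj G a b = true -> is_vertex G a) ->
  forall s, matched s v = false -> Pdone G v (ranking_step G y s (Dl v)).
Proof.
  intros Hsym Hirr Hvert s Hm. rewrite step_Dl, Hm.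
  destruct (argmin y (cands G s v)) as [z|] eqn:Ha.
  - apply argmin_in, cands_in in Ha as [Ha1 Ha2].
    assert (z <> v) by (intros ->; rewrite Hirr in Ha1; discriminate).
    split.
    + intros c Hc; apply in_app_or in Hc as [Hc|[Hc|[]]]; [exact (matched_false_snd _ _ _ Hm Hc)|].
      injection Hc; intros; auto.
    + left. unfold matched; rewrite existsb_app; simpl; rewrite Nat.eqb_refl; apply orb_true_r.
  - apply argmin_none in Ha. split; [intros c; apply matched_false_snd; auto|right].
    intros x Hx. destruct (matched s x) eqn:E; auto. exfalso.
    assert (In x (cands G s v)) as Hin.
    { unfold cands; apply filter_In; split.
      - apply is_vertex_verts; apply (Hvert x v); rewrite Hsym; auto.
      - rewrite Hx, E; reflexivity. }
    rewrite Ha in Hin; destruct Hin.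
Qed.

Definition keep v (e : event) := negb (event_eqb e (Arr v)) && negb (event_eqb e (Dl v)).

Lemma events_remove G v : events (remove_vertex G v) = filter (keep v) (events G).
Proof. reflexivity. Qed.

Lemma verts_remove G v : verts (remove_vertex G v) = filter (fun x => negb (Nat.eqb x v)) (verts G).
Proof.
  unfold verts; simpl. induction (events G) as [|e l IH]; simpl; auto.
  destruct e as [x|x]; simpl; destruct (Nat.eqb x v); simpl; auto. rewrite IH; auto.
Qed.

Lemma cands_remove G v s w : w <> v ->
  cands (remove_vertex G v) s w = filter (fun x => negb (Nat.eqb x v)) (cands G s w).
Proof.
  intros Hw. unfold cands; rewrite verts_remove. simpl.
  assert (Nat.eqb w v = false) as Hw' by (apply Nat.eqb_neq; auto).
  rewrite Hw'. simpl. induction (verts G) as [|a l IH]; simpl; auto.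
  destruct (Nat.eqb a v) eqn:E1; simpl; rewrite ?E1;
    destruct (adj G w a); destruct (matched s a); simpl; rewrite ?E1; simpl; rewrite ?IH; auto.
Qed.

Lemma fold_filter_arr H y v x l s :
  fold_left (ranking_step H y) (filter (keep v) (Arr x :: l)) s =
  fold_left (ranking_step H y) (filter (keep v) l) s.
Proof. simpl. destruct (keep v (Arr x)); reflexivity. Qed.

Lemma filter_dl v x l : x <> v -> filter (keep v) (Dl x :: l) = Dl x :: filter (keep v) l.
Proof.
  intros H. simpl. unfold keep at 1; simpl.
  replace (Nat.eqb x v) with false by (symmetry; apply Nat.eqb_neq; auto). reflexivity.
Qed.

Lemma upd_neq z w t x : x <> w -> upd z w t x = z x.
Proof. unfold upd; intros H; apply Nat.eqb_neq in H; rewrite H; auto. Qed.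

Lemma upd_eq z w t : upd z w t w = t.
Proof. unfold upd; rewrite Nat.eqb_refl; auto. Qed.

Lemma D_lemma G u v y a b t :
  (forall a b, adj G a b = adj G b a) -> (forall a, adj G a a = false) ->
  (forall a b, adj G a b = true -> is_vertex G a) -> u <> v ->
  forall l s, matched s v = false ->
  ~ (exists c, In (c,u) (fold_left (ranking_step (remove_vertex G v) (upd y u a)) (filter (keep v) l) s)) ->
  ~ (exists c, In (c,u) (fold_left (ranking_step (remove_vertex G v) (upd y u b)) (filter (keep v) l) s)) ->
  ((exists c, In (c,v) (fold_left (ranking_step G (upd (upd y u a) v t)) l s)) <->
   (exists c, In (c,v) (fold_left (ranking_step G (upd (upd y u b) v t)) l s))).
Proof.
  intros Hsym Hirr Hvert Huv l. induction l as [|e l IH]; intros s Hm H1 H2.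
  - simpl; tauto.
  - destruct e as [x|x].
    + rewrite fold_filter_arr in H1, H2. cbn [fold_left]. rewrite !step_Arr. auto.
    + destruct (Nat.eq_dec x v) as [->|Hxv].
      * split; intros Hc; exfalso.
        -- exact (E_lemma _ _ _ Hsym l _ (F_lemma G _ v Hsym Hirr Hvert s Hm) Hc).
        -- exact (E_lemma _ _ _ Hsym l _ (F_lemma G _ v Hsym Hirr Hvert s Hm) Hc).
      * rewrite filter_dl in H1, H2 by auto. cbn [fold_left] in *.
        rewrite !step_Dl in *. destruct (matched s x) eqn:Hx; [auto|].
        rewrite cands_remove in H1, H2 by auto.
        set (L := cands G s x) in *.
        set (L' := filter (fun x0 => negb (Nat.eqb x0 v)) L) in *.
        set (Ya := upd (upd y u a) v t) in *. set (Yb := upd (upd y u b) v t) in *.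
        assert (Na : argmin (upd y u a) L' <> Some u).
        { intros E; rewrite E in H1; apply H1; exists x; apply persist, in_or_app; right; left; auto. }
        assert (Nb : argmin (upd y u b) L' <> Some u).
        { intros E; rewrite E in H2; apply H2; exists x; apply persist, in_or_app; right; left; auto. }
        assert (Ea : argmin Ya L' = argmin (upd y u a) L').
        { apply argmin_ext; intros z Hz; unfold L' in Hz; apply filter_In in Hz as [_ Hz].
          apply negb_true_iff, Nat.eqb_neq in Hz. unfold Ya; rewrite upd_neq; auto. }
        assert (Eb : argmin Yb L' = argmin (upd y u b) L').
        { apply argmin_ext; intros z Hz; unfold L' in Hz; apply filter_In in Hz as [_ Hz].
          apply negb_true_iff, Nat.eqb_neq in Hz. unfold Yb; rewrite upd_neq; auto. }
        assert (Ca := argmin_filter v Ya L). assert (Cb := argmin_filter v Yb L).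
        fold L' in Ca, Cb.
        assert (NUa : argmin Ya L <> Some u).
        { destruct Ca as [Ca|Ca]; rewrite Ca; [intros E; injection E; auto|rewrite Ea; auto]. }
        assert (NUb : argmin Yb L <> Some u).
        { destruct Cb as [Cb|Cb]; rewrite Cb; [intros E; injection E; auto|rewrite Eb; auto]. }
        assert (Hag : forall z, z <> u -> Ya z = Yb z).
        { intros z Hz; unfold Ya, Yb, upd. destruct (Nat.eqb z v); auto.
          apply Nat.eqb_neq in Hz; rewrite Hz; auto. }
        assert (Yau : Ya u = a) by (unfold Ya; rewrite upd_neq, upd_eq; auto).
        assert (Ybu : Yb u = b) by (unfold Yb; rewrite upd_neq, upd_eq; auto).
        assert (Q : argmin Ya L = argmin Yb L).
        { destruct (Rle_dec b a) as [r|r].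
          - destruct (argmin_mono u Ya Yb L Hag ltac:(lra)) as [E|E]; [congruence|auto].
          - assert (Hag' : forall z, z <> u -> Yb z = Ya z) by (intros; symmetry; auto).
            destruct (argmin_mono u Yb Ya L Hag' ltac:(lra)) as [E|E]; [congruence|auto]. }
        destruct (argmin Ya L) as [q|] eqn:Hq.
        -- destruct (Nat.eq_dec q v) as [->|Hqv].
           ++ rewrite <- Q. split; intros _; exists x; apply persist, in_or_app; right; left; auto.
           ++ destruct Ca as [Ca|Ca]; [congruence|]. destruct Cb as [Cb|Cb]; [congruence|].
              rewrite <- Q. rewrite Ea in Ca. rewrite Eb, <- Q in Cb.
              rewrite <- Ca in H1. rewrite <- Cb in H2.
              apply IH; auto.
              unfold matched; rewrite existsb_app; simpl.
              fold (matched s v). rewrite Hm.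
              replace (Nat.eqb x v) with false by (symmetry; apply Nat.eqb_neq; auto).
              replace (Nat.eqb q v) with false by (symmetry; apply Nat.eqb_neq; auto).
              reflexivity.
        -- destruct Ca as [Ca|Ca]; [congruence|]. destruct Cb as [Cb|Cb]; [congruence|].
           rewrite <- Q. rewrite Ea in Ca. rewrite Eb, <- Q in Cb.
           rewrite <- Ca in H1. rewrite <- Cb in H2. apply IH; auto.
Qed.

Lemma passive_mono H z w t1 t2 :
  passive H (upd z w t1) w -> t2 <= t1 -> passive H (upd z w t2) w.
Proof.
  unfold passive, ranking; intros Hp Hle.
  apply (passive_mono_gen H w (upd z w t1) (upd z w t2)); auto.
  - intros x Hx; rewrite !upd_neq; auto.
  - rewrite !upd_eq; auto.
Qed.

Lemma marg_exists H z w : exists th, is_marginal_rank H z w th.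
Proof.
  destruct (classic (exists th, 0 <= th <= 1 /\ passive_at_minus H z w th)) as [Hex|Hne].
  - set (S := fun th => 0 <= th <= 1 /\ passive_at_minus H z w th).
    assert (Hb : bound S) by (exists 1; intros x [Hx _]; lra).
    destruct (completeness S Hb Hex) as [m [Hub Hlub]].
    destruct Hex as [th0 Hth0].
    assert (m <= 1) by (apply Hlub; intros x [Hx _]; lra).
    assert (th0 <= m) by (apply Hub; auto).
    exists m. left. split; [destruct Hth0; lra|split].
    + exists 1; split; [lra|]. intros t Ht.
      destruct (classic (exists th, S th /\ t < th)) as [[th [[Hth1 [eps [He Hp]]] Ht2]]|Hn].
      * set (t0 := Rmax t (th - eps/2)).
        assert (t <= t0) by apply Rmax_l.
        assert (th - eps/2 <= t0) by apply Rmax_r.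
        assert (t0 < th) by (unfold t0; apply Rmax_lub_lt; lra).
        apply passive_mono with t0; auto. apply Hp; lra.
      * exfalso. assert (m <= t).
        { apply Hlub; intros x Hx. destruct (Rle_dec x t); auto. exfalso; apply Hn; exists x; split; auto; lra. }
        lra.
    + intros th Hth Hp; apply Hub; split; auto.
  - exists 0. right; split; auto. intros th Hth Hp; apply Hne; exists th; auto.
Qed.

Lemma marg_equiv H z1 z2 w th :
  (forall t, passive H (upd z1 w t) w <-> passive H (upd z2 w t) w) ->
  is_marginal_rank H z1 w th -> is_marginal_rank H z2 w th.
Proof.
  intros Heq.
  assert (Hp : forall x, passive_at_minus H z1 w x <-> passive_at_minus H z2 w x).
  { intros x; unfold passive_at_minus; split; intros [eps [He Hq]]; exists eps; split; auto;
      intros t Ht; apply Heq; auto. }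
  unfold is_marginal_rank. intros [[A [B C]]|[A B]].
  - left; split; auto; split; [apply Hp; auto|]. intros x Hx Hx2; apply C; auto; apply Hp; auto.
  - right; split; auto. intros x Hx Hx2; apply (A x Hx); apply Hp; auto.
Qed.

Theorem mainTheorem10 (G : instance) (u v : nat) (y : nat -> R) (tau : R) :
  valid_instance G ->
  bipartite G ->
  adj G u v = true ->
  before G (Dl u) (Dl v) ->
  (forall x, is_vertex G x -> x <> u -> x <> v -> 0 <= y x < 1) ->
  is_marginal_rank (remove_vertex G v) y u tau ->
  exists theta, 0 <= theta <= 1 /\
    forall yu, 0 <= yu <= 1 -> tau < yu ->
      is_marginal_rank G (upd y u yu) v theta.
Proof.
  intros Hval _ Huv _ _ Htau.
  destruct Hval as (_ & _ & _ & Hsym & Hirr & Hvert & _).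
  assert (Nuv : u <> v) by (intros ->; rewrite Hirr in Huv; discriminate).
  assert (Htr : 0 <= tau <= 1) by (destruct Htau as [[A _]|[_ A]]; lra).
  assert (Hnp : forall a, tau < a -> a <= 1 -> ~ passive (remove_vertex G v) (upd y u a) u).
  { intros a Ha Ha1 Hp.
    assert (Hpam : passive_at_minus (remove_vertex G v) y u a).
    { exists 1; split; [lra|]. intros t Ht. apply passive_mono with a; auto; lra. }
    destruct Htau as [[_ [_ Hmax]]|[Hnone _]].
    - assert (a <= tau) by (apply Hmax; auto; lra). lra.
    - apply (Hnone a); auto; lra. }
  assert (Heq : forall a b t, tau < a <= 1 -> tau < b <= 1 ->
     (passive G (upd (upd y u a) v t) v <-> passive G (upd (upd y u b) v t) v)).
  { intros a b t Ha Hb. unfold passive, ranking.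
    apply D_lemma; auto.
    - exact (Hnp a ltac:(lra) ltac:(lra)).
    - exact (Hnp b ltac:(lra) ltac:(lra)). }
  destruct (Rlt_or_le tau 1) as [Hlt|Hge].
  - destruct (marg_exists G (upd y u 1) v) as [th Hth].
    exists th. split.
    + destruct Hth as [[A _]|[_ A]]; lra.
    + intros yu Hyu Hty. apply (marg_equiv G (upd y u 1)); auto.
      intros t; apply Heq; lra.
  - exists 0. split; [lra|]. intros; lra.
Qed.
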